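(* Let $\nu>0$, $L>0$, $T>0$, and let $u(x,t)$ and $f(x,t)$ be smooth vector fields on $\mathbb{R}^3\times[0,T]$, periodic of period $L$ in each coordinate direction ($u$ need not be divergence-free). Let $\Gamma=\partial_t+u\cdot\nabla-\nu\Delta$, acting componentwise. Let $\ell$ be a smooth $L$-periodic vector field solving $$(\partial_t+u\cdot\nabla-\nu\Delta)\ell+u=0,$$ put $A=x+\ell$, let $(\nabla A)_{mj}=\partial_jA^m$, assume $\nabla A$ is invertible everywhere, let $Q=(\nabla A)^{-1}$ and $C_{m,k;i}=Q_{ji}\partial_j\partial_kA^m$. Let $v$ be a smooth $L$-periodic vector field solving $$\Gamma v_i=2\nu\, C_{m,k;i}\,\partial_k v_m+Q_{ji}f_j,\qquad i=1,2,3.$$ Define $w_i=(\partial_iA^m)v_m$. Then $$\Gamma w+(\nabla u)^*w=f,$$ i.e. $\Gamma w_i+(\partial_i u_j)w_j=f_i$ for $i=1,2,3$.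
   Context: Repeated indices are summed over $\{1,2,3\}$. $(\nabla u)^*$ denotes the transpose of the matrix $(\nabla u)_{jk}=\partial_k u_j$. *)

(* Defs.v *)
From HB Require Import structures.
From mathcomp Require Import all_boot all_order all_algebra.
From mathcomp Require Import all_classical all_reals all_analysis.
Set Implicit Arguments. Unset Strict Implicit. Unset Printing Implicit Defensive.
Import Order.TTheory GRing.Theory Num.Theory.
Import numFieldNormedType.Exports.
Local Open Scope ring_scope.

Definition sfield (R : realType) := 'rV[R]_3 -> R -> R.
Definition vfield (R : realType) := 'I_3 -> sfield R.

Definition evec (R : realType) (j : 'I_3) : 'rV[R]_3 := delta_mx 0 j.

(* Partial derivative: [Some j] = d/dx_j, [None] = d/dt. *)
Definition pd (R : realType) (d : option 'I_3) (g : sfield R) : sfield R :=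
  fun x t => match d with
  | Some j => derive1 (fun s : R => g (x + s *: evec R j) t) 0
  | None => derive1 (fun s : R => g x s) t
  end.

Definition pdx (R : realType) (j : 'I_3) (g : sfield R) : sfield R := pd (Some j) g.
Definition pdt (R : realType) (g : sfield R) : sfield R := pd None g.

Fixpoint iter_pd (R : realType) (s : seq (option 'I_3)) (g : sfield R) : sfield R :=
  match s with
  | [::] => g
  | d :: s' => pd d (iter_pd s' g)
  end.

Definition section (R : realType) (d : option 'I_3) (g : sfield R) (x : 'rV[R]_3) (t : R)
  : R -> R :=
  match d with
  | Some j => fun s => g (x + s *: evec R j) t
  | None => fun s => g x (t + s)
  end.

Definition smooth (R : realType) (g : sfield R) : Prop :=
  forall s : seq (option 'I_3),
    continuous (fun p : 'rV[R]_3 * R => iter_pd s g p.1 p.2) /\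
    forall (d : option 'I_3) x t, derivable (section d (iter_pd s g) x t) 0 1.

Definition smooth_v (R : realType) (F : vfield R) : Prop := forall i, smooth (F i).

Definition periodic (R : realType) (L : R) (g : sfield R) : Prop :=
  forall j x t, g (x + L *: evec R j) t = g x t.

Definition periodic_v (R : realType) (L : R) (F : vfield R) : Prop :=
  forall i, periodic L (F i).

Definition Gamma (R : realType) (nu : R) (u : vfield R) (g : sfield R) : sfield R :=
  fun x t => pdt g x t + \sum_(j < 3) u j x t * pdx j g x t
             - nu * \sum_(j < 3) pdx j (pdx j g) x t.

Definition Amap (R : realType) (ell : vfield R) : vfield R :=
  fun m x t => x 0 m + ell m x t.

Definition gradA (R : realType) (ell : vfield R) (x : 'rV[R]_3) (t : R) : 'M[R]_3 :=
  \matrix_(m < 3, j < 3) pdx j (Amap ell m) x t.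

Definition Qmat (R : realType) (ell : vfield R) (x : 'rV[R]_3) (t : R) : 'M[R]_3 :=
  invmx (gradA ell x t).

Definition Ccoef (R : realType) (ell : vfield R) (m k i : 'I_3) : sfield R :=
  fun x t => \sum_(j < 3) Qmat ell x t j i * pdx j (pdx k (Amap ell m)) x t.

Definition wfield (R : realType) (ell v : vfield R) : vfield R :=
  fun i x t => \sum_(m < 3) pdx i (Amap ell m) x t * v m x t.

(* Main.v *)
Require Import Defs.
From HB Require Import structures.
From mathcomp Require Import all_boot all_order all_algebra.
From mathcomp Require Import all_classical all_reals all_analysis.
Import Order.TTheory GRing.Theory Num.Theory.
From mathcomp Require Import ring lra.
Import numFieldNormedType.Exports.
Local Open Scope ring_scope.

Section Fr.
Variable R : realType.
Implicit Types (g h : sfield R).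

Lemma mvt_helper (f df : R -> R) (h : R) : 0 < h ->
  (forall z : R, is_derive z (1:R) f (df z)) ->
  exists2 c, 0 < c < h & f h - f 0 = df c * h.
Proof.
move=> h0 Hd.
have [c cI E] : exists2 c, c \in `]0, h[ & f h - f 0 = df c * (h - 0).
  apply: MVT h0 (fun z _ => Hd z) _.
  apply: derivable_within_continuous => z _.
  exact: (@ex_derive _ _ _ _ _ _ _ (Hd z)).
exists c; first by move: cI; rewrite in_itv.
by rewrite E subr0.
Qed.

Lemma clairaut2 (F Fa Fb D1 D2 : R -> R -> R) :
 (forall a b : R, is_derive a (1:R) (fun a => F a b) (Fa a b)) ->
 (forall a b : R, is_derive b (1:R) (F a) (Fb a b)) ->
 (forall a b : R, is_derive b (1:R) (Fa a) (D1 a b)) ->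
 (forall a b : R, is_derive a (1:R) (fun a => Fb a b) (D2 a b)) ->
 (forall e, 0 < e -> exists2 d, 0 < d & forall a b, `|a| < d -> `|b| < d ->
      `|D1 a b - D1 0 0| < e /\ `|D2 a b - D2 0 0| < e) ->
 D1 0 0 = D2 0 0.
Proof.
move=> HFa HFb HD1 HD2 Hc.
apply/eqP; rewrite -subr_eq0; apply/negPn/negP => hne.
set c := D1 0 0 - D2 0 0.
have e0 : 0 < `|c| / 2 by rewrite divr_gt0 // normr_gt0.
have [d d0 Hd] := Hc _ e0.
set h := d / 2.
have h0 : 0 < h by rewrite divr_gt0.
have hd : h < d by rewrite /h; lra.
have [xi /andP[xi0 xih] E1] := mvt_helper (fun a => F a h - F a 0)
   (fun a => Fa a h - Fa a 0) h h0
   (fun z => is_deriveB (f := fun a => F a h) (g := fun a => F a 0) (HFa z h) (HFa z 0)).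
have [eta1 /andP[eta10 eta1h] E2] := mvt_helper (Fa xi) (D1 xi) h h0 (HD1 xi).
have [eta2 /andP[eta20 eta2h] E3] := mvt_helper (fun b => F h b - F 0 b)
   (fun b => Fb h b - Fb 0 b) h h0
   (fun z => is_deriveB (f := F h) (g := F 0) (HFb h z) (HFb 0 z)).
have [xi2 /andP[xi20 xi2h] E4] := mvt_helper (fun a => Fb a eta2) (fun a => D2 a eta2) h h0 (fun z => HD2 z eta2).
have Deq : D1 xi eta1 = D2 xi2 eta2.
  apply: (mulIf (x := h * h)); first by rewrite mulf_neq0 // gt_eqF.
  have -> : D1 xi eta1 * (h * h) = (D1 xi eta1 * h) * h by ring.
  have -> : D2 xi2 eta2 * (h * h) = (D2 xi2 eta2 * h) * h by ring.
  rewrite -E2 -E4.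
  have -> : (Fa xi h - Fa xi 0) * h = F h h - F h 0 - (F 0 h - F 0 0) by rewrite -E1.
  have -> : (Fb h eta2 - Fb 0 eta2) * h = F h h - F 0 h - (F h 0 - F 0 0) by rewrite -E3.
  ring.
have lt1 : `|xi| < d by rewrite gtr0_norm //; lra.
have lt2 : `|eta1| < d by rewrite gtr0_norm //; lra.
have lt3 : `|xi2| < d by rewrite gtr0_norm //; lra.
have lt4 : `|eta2| < d by rewrite gtr0_norm //; lra.
have [B1 _] := Hd _ _ lt1 lt2.
have [_ B2] := Hd _ _ lt3 lt4.
have Hc' : `|c| <= `|D1 xi eta1 - D1 0 0| + `|D2 xi2 eta2 - D2 0 0|.
  rewrite (distrC (D1 xi eta1)).
  have -> : c = (D1 0 0 - D1 xi eta1) + (D2 xi2 eta2 - D2 0 0) by rewrite Deq /c; ring.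
  exact: ler_normD.
lra.
Qed.

Definition trx (d : option 'I_3) (s : R) (x : 'rV[R]_3) : 'rV[R]_3 :=
  match d with Some j => x + s *: evec R j | None => x end.
Definition trt (d : option 'I_3) (s : R) (t : R) : R :=
  match d with Some _ => t | None => t + s end.

Lemma sectionE d g x t : section d g x t = fun s => g (trx d s x) (trt d s t).
Proof. by case: d. Qed.

Lemma trx0 d x : trx d 0 x = x.
Proof. by case: d => //= j; rewrite scale0r addr0. Qed.
Lemma trt0 d t : trt d 0 t = t.
Proof. by case: d => //=; rewrite addr0. Qed.
Lemma trxD d a b x : trx d b (trx d a x) = trx d (a + b) x.
Proof. by case: d => //= j; rewrite scalerDl addrA. Qed.
Lemma trtD d a b t : trt d b (trt d a t) = trt d (a + b) t.
Proof. by case: d => //=; rewrite addrA. Qed.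
Lemma trxC d1 d2 a b x : trx d1 a (trx d2 b x) = trx d2 b (trx d1 a x).
Proof. by case: d1; case: d2 => //= *; rewrite addrAC. Qed.
Lemma trtC d1 d2 a b t : trt d1 a (trt d2 b t) = trt d2 b (trt d1 a t).
Proof. by case: d1; case: d2 => //= *; rewrite addrAC. Qed.

Lemma derive1_shift (f : R -> R) a : derive1 f a = derive1 (fun s => f (a + s)) 0.
Proof.
rewrite /derive1; do 2 f_equal; apply: funext => h /=.
by rewrite !addr0 (addrC h a).
Qed.

Lemma derivable_shift (f : R -> R) a :
  derivable f a 1 <-> derivable (fun s => f (a + s)) 0 1.
Proof.
rewrite derivable1P.
have -> : (fun h : R => f (h *: (1:R) + a)) = (fun s => f (a + s)) by
  apply: funext => h /=; rewrite [_%:A]mulr1 addrC.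
by [].
Qed.

Lemma pd_sec d g x t : pd d g x t = derive1 (section d g x t) 0.
Proof. by case: d => //=; rewrite derive1_shift. Qed.

Lemma sec_shift d g x t a :
  section d g (trx d a x) (trt d a t) = fun s => section d g x t (a + s).
Proof. by rewrite !sectionE; apply: funext => s; rewrite trxD trtD. Qed.

Lemma pd_at d g x t a :
  derive1 (section d g x t) a = pd d g (trx d a x) (trt d a t).
Proof. by rewrite pd_sec sec_shift derive1_shift. Qed.

Lemma derivable_at d g x t a :
  derivable (section d g x t) a 1 <->
  derivable (section d g (trx d a x) (trt d a t)) 0 1.
Proof. by rewrite sec_shift; apply: derivable_shift. Qed.

Definition good g := forall d x t, derivable (section d g x t) 0 1.

Lemma good_is_derive g d x t a : good g ->
  is_derive a (1:R) (section d g x t) (pd d g (trx d a x) (trt d a t)).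
Proof.
move=> gg; rewrite -pd_at derive1E; apply: derivableP.
by apply/derivable_at; apply: gg.
Qed.


Ltac fext := apply: funext => ?; apply: funext => ?.

Lemma pd_add d g h : good g -> good h ->
  pd d (fun x t => g x t + h x t) = fun x t => pd d g x t + pd d h x t.
Proof.
move=> gg gh; apply: funext => x; apply: funext => t.
rewrite !pd_sec !derive1E.
have -> : section d (fun x t => g x t + h x t) x t = section d g x t + section d h x t
  by case: d.
by rewrite deriveD.
Qed.

Lemma good_add g h : good g -> good h -> good (fun x t => g x t + h x t).
Proof.
move=> gg gh d x t.
have -> : section d (fun x t => g x t + h x t) x t = section d g x t + section d h x t
  by case: d.
exact: derivableD.
Qed.

Lemma pd_sub d g h : good g -> good h ->
  pd d (fun x t => g x t - h x t) = fun x t => pd d g x t - pd d h x t.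
Proof.
move=> gg gh; apply: funext => x; apply: funext => t.
rewrite !pd_sec !derive1E.
have -> : section d (fun x t => g x t - h x t) x t = section d g x t - section d h x t
  by case: d.
by rewrite deriveB.
Qed.

Lemma good_sub g h : good g -> good h -> good (fun x t => g x t - h x t).
Proof.
move=> gg gh d x t.
have -> : section d (fun x t => g x t - h x t) x t = section d g x t - section d h x t
  by case: d.
exact: derivableB.
Qed.

Lemma pd_mul d g h : good g -> good h ->
  pd d (fun x t => g x t * h x t) = fun x t => g x t * pd d h x t + h x t * pd d g x t.
Proof.
move=> gg gh; apply: funext => x; apply: funext => t.
rewrite !pd_sec !derive1E.
have -> : section d (fun x t => g x t * h x t) x t = section d g x t * section d h x t
  by case: d.
rewrite deriveM //.
by case: d => [j|] /=; rewrite ?scale0r ?addr0.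
Qed.

Lemma good_mul g h : good g -> good h -> good (fun x t => g x t * h x t).
Proof.
move=> gg gh d x t.
have -> : section d (fun x t => g x t * h x t) x t = section d g x t * section d h x t
  by case: d.
exact: derivableM.
Qed.

Lemma pd_cst d (c : R) : pd d (fun _ _ => c) = fun _ _ => 0.
Proof.
apply: funext => x; apply: funext => t.
rewrite pd_sec derive1E.
have -> : section d (fun _ _ => c) x t = cst c by case: d.
by rewrite derive_cst.
Qed.

Lemma good_cst (c : R) : good (fun _ _ => c).
Proof.
move=> d x t; have -> : section d (fun _ _ => c) x t = cst c by case: d.
exact: derivable_cst.
Qed.

Lemma pd_sum n d (F : 'I_n -> sfield R) : (forall m, good (F m)) ->
  pd d (fun x t => \sum_(m < n) F m x t) = (fun x t => \sum_(m < n) pd d (F m) x t)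
  /\ good (fun x t => \sum_(m < n) F m x t).
Proof.
elim: n F => [|n IH] F HF.
  have -> : (fun x t => \sum_(m < 0) F m x t) = fun _ _ => 0.
    by apply: funext => x; apply: funext => t; rewrite big_ord0.
  split; last exact: good_cst.
  by rewrite pd_cst; apply: funext => x; apply: funext => t; rewrite big_ord0.
have -> : (fun x t => \sum_(m < n.+1) F m x t) =
   fun x t => (\sum_(m < n) F (widen_ord (leqnSn n) m) x t) + F ord_max x t.
  by apply: funext => x; apply: funext => t; rewrite big_ord_recr.
have [E G] := IH (fun m => F (widen_ord (leqnSn n) m)) (fun m => HF _).
split; last exact: good_add.
rewrite pd_add // E; apply: funext => x; apply: funext => t.
by rewrite big_ord_recr.
Qed.

Lemma iter_pd_rcons s d g : iter_pd s (pd d g) = iter_pd (rcons s d) g.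
Proof. by elim: s => //= e s ->. Qed.

Lemma smooth_pd d g : smooth g -> smooth (pd d g).
Proof. by move=> sg s; rewrite iter_pd_rcons; apply: sg. Qed.

Lemma smooth_good g : smooth g -> good g.
Proof. by move=> sg d x t; exact: (sg [::]).2. Qed.

Definition cx (d : option 'I_3) (i : 'I_1) (j : 'I_3) : R :=
  if d is Some k then evec R k i j else 0.
Definition ct (d : option 'I_3) : R := if d is None then 1 else 0.

Lemma trx_entry d s y i j : trx d s y i j = y i j + s * cx d i j.
Proof. by case: d => [k|] /=; rewrite ?mxE ?mulr0 ?addr0. Qed.
Lemma trt_entry d s t : trt d s t = t + s * ct d.
Proof. by case: d => [k|] /=; rewrite ?mulr0 ?addr0 ?mulr1. Qed.
Lemma cx_le1 d i j : `|cx d i j| <= 1.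
Proof. case: d => [k|] /=; rewrite ?normr0 // /evec mxE; by case: (_ && _); rewrite ?normr0 ?normr1. Qed.
Lemma ct_le1 d : `|ct d| <= 1.
Proof. by case: d => [k|] /=; rewrite ?normr0 ?normr1. Qed.

Lemma num_bound (y a b c1 c2 r : R) : `|a| < r / 2 -> `|b| < r / 2 ->
  `|c1| <= 1 -> `|c2| <= 1 -> `|y - (y + b * c2 + a * c1)| < r.
Proof.
move=> ha hb h1 h2.
have -> : y - (y + b * c2 + a * c1) = - (b * c2 + a * c1) by ring.
rewrite normrN; apply: (le_lt_trans (ler_normD _ _)); rewrite !normrM.
have := normr_ge0 a; have := normr_ge0 b; nra.
Qed.

Lemma cont_tr (G : sfield R) d1 d2 x t :
  continuous (fun p : 'rV[R]_3 * R => G p.1 p.2) -> forall e, 0 < e ->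
  exists2 r, 0 < r & forall a b, `|a| < r -> `|b| < r ->
    `|G (trx d1 a (trx d2 b x)) (trt d1 a (trt d2 b t)) - G x t| < e.
Proof.
move=> Gc e e0.
have := Gc (x, t); move/cvgrPdist_lt => /(_ e e0) /nbhs_ballP [r /= r0 Hr].
exists (r / 2); first by rewrite divr_gt0.
move=> a b ha hb.
have r2 : r / 2 / 2 < r / 2 by lra.
rewrite distrC; apply: (Hr (trx d1 a (trx d2 b x), trt d1 a (trt d2 b t))).
split => /=.
  split => // i j; rewrite /ball /= !trx_entry.
  by apply: num_bound => //; apply: cx_le1.
have -> : trt d1 a (trt d2 b t) = t + b * ct d2 + a * ct d1 by rewrite !trt_entry.
by apply: num_bound => //; apply: ct_le1.
Qed.

Lemma clairaut g d1 d2 : smooth g -> pd d1 (pd d2 g) = pd d2 (pd d1 g).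
Proof.
move=> sg; apply: funext => x; apply: funext => t.
pose P1 a b := trx d1 a (trx d2 b x).
pose P2 a b := trt d1 a (trt d2 b t).
have dA : forall G, good G -> forall a b : R,
    is_derive a (1:R) (fun a => G (P1 a b) (P2 a b)) (pd d1 G (P1 a b) (P2 a b)).
  move=> G gG a b.
  by have := good_is_derive G d1 (trx d2 b x) (trt d2 b t) a gG; rewrite sectionE.
have dB : forall G, good G -> forall a b : R,
    is_derive b (1:R) (fun b => G (P1 a b) (P2 a b)) (pd d2 G (P1 a b) (P2 a b)).
  move=> G gG a b.
  have := good_is_derive G d2 (trx d1 a x) (trt d1 a t) b gG; rewrite sectionE.
  have -> : (fun b => G (P1 a b) (P2 a b)) =
            (fun s => G (trx d2 s (trx d1 a x)) (trt d2 s (trt d1 a t))).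
    by apply: funext => s; rewrite /P1 /P2 trxC trtC.
  by rewrite /P1 /P2 trxC trtC.
have g1 := smooth_good _ (smooth_pd d1 _ sg).
have g2 := smooth_good _ (smooth_pd d2 _ sg).
have g0 := smooth_good _ sg.
have := @clairaut2 (fun a b => g (P1 a b) (P2 a b))
  (fun a b => pd d1 g (P1 a b) (P2 a b)) (fun a b => pd d2 g (P1 a b) (P2 a b))
  (fun a b => pd d2 (pd d1 g) (P1 a b) (P2 a b))
  (fun a b => pd d1 (pd d2 g) (P1 a b) (P2 a b))
  (dA g g0) (dB g g0) (dB _ g1) (dA _ g2).
rewrite /P1 /P2 !trx0 !trt0 => -> //.
move=> e e0.
have [r1 r10 H1] := cont_tr _ d1 d2 x t (sg [:: d2; d1]).1 e e0.
have [r2 r20 H2] := cont_tr _ d1 d2 x t (sg [:: d1; d2]).1 e e0.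
exists (Num.min r1 r2); first by rewrite lt_min r10 r20.
move=> a b; rewrite !lt_min => /andP[a1 a2] /andP[b1 b2].
by split; [exact: H1 | exact: H2].
Qed.


Opaque pd.
End Fr.
Arguments mvt_helper {R}.
Arguments clairaut2 {R}.
Arguments trx {R}.
Arguments trt {R}.
Arguments sectionE {R}.
Arguments trx0 {R}.
Arguments trt0 {R}.
Arguments trxD {R}.
Arguments trtD {R}.
Arguments trxC {R}.
Arguments trtC {R}.
Arguments derive1_shift {R}.
Arguments derivable_shift {R}.
Arguments pd_sec {R}.
Arguments sec_shift {R}.
Arguments pd_at {R}.
Arguments derivable_at {R}.
Arguments good {R}.
Arguments good_is_derive {R}.
Arguments pd_add {R}.
Arguments good_add {R}.
Arguments pd_sub {R}.
Arguments good_sub {R}.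
Arguments pd_mul {R}.
Arguments good_mul {R}.
Arguments pd_cst {R}.
Arguments good_cst {R}.
Arguments pd_sum {R}.
Arguments iter_pd_rcons {R}.
Arguments smooth_pd {R}.
Arguments smooth_good {R}.
Arguments cx {R}.
Arguments ct {R}.
Arguments trx_entry {R}.
Arguments trt_entry {R}.
Arguments cx_le1 {R}.
Arguments ct_le1 {R}.
Arguments num_bound {R}.
Arguments cont_tr {R}.
Arguments clairaut {R}.

Opaque pd.
Section C.
Variable R : realType.
Implicit Types (g h : sfield R).
Lemma good_sum n (F : 'I_n -> sfield R) : (forall m, good (F m)) ->
  good (fun x t => \sum_(m < n) F m x t).
Proof. by move=> H; exact: (pd_sum _ None F H).2. Qed.

Lemma pd_sumE n d (F : 'I_n -> sfield R) : (forall m, good (F m)) ->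
  pd d (fun x t => \sum_(m < n) F m x t) = (fun x t => \sum_(m < n) pd d (F m) x t).
Proof. by move=> H; exact: (pd_sum _ d F H).1. Qed.

Ltac gd := repeat lazymatch goal with
  | |- good (fun x t => ?F x t) => change (good F)
  | |- smooth (fun x t => ?F x t) => change (smooth F)
  | H : good ?g |- good ?g => exact: H
  | H : forall k, good (pdx k ?g) |- good (pd (Some ?j) ?g) => apply: (H j)
  | H : forall k, good (pdx k ?g) |- good (pdx ?j ?g) => apply: (H j)
  | |- good (fun x t => @?A x t - @?B x t) => apply: good_sub
  | |- good (fun x t => @?A x t + @?B x t) => apply: good_add
  | |- good (fun x t => @?A x t * @?B x t) => apply: good_mul
  | |- good (fun x t => \sum_(m < _) @?A m x t) => apply: good_sum => ?
  | |- good (fun _ _ => _) => apply: good_cst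
  | |- good _ => apply: smooth_good
  | |- smooth (pd _ _) => apply: smooth_pd
  | |- smooth (pdx _ _) => apply: smooth_pd
  | H : forall j, smooth (?u j) |- smooth (?u _) => apply: H
  | H : smooth ?g |- smooth ?g => exact: H
  end.
Ltac gds := solve [gd].

Lemma alg_mul (nu F G Ft Gt : R) (U Fj Gj Fjj Gjj : 'I_3 -> R) :
 F * Gt + G * Ft + \sum_(j < 3) U j * (F * Gj j + G * Fj j)
 - nu * \sum_(j < 3) (F * Gjj j + Gj j * Fj j + (G * Fjj j + Fj j * Gj j))
 = F * (Gt + \sum_(j < 3) U j * Gj j - nu * \sum_(j < 3) Gjj j)
   + G * (Ft + \sum_(j < 3) U j * Fj j - nu * \sum_(j < 3) Fjj j)
   - 2 * nu * \sum_(k < 3) Fj k * Gj k.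
Proof. rewrite !big_ord_recr !big_ord0 /=. ring. Qed.

Lemma alg_sum (nu : R) (U Ft : 'I_3 -> R) (Fj Fjj : 'I_3 -> 'I_3 -> R) :
 \sum_(m < 3) Ft m + \sum_(j < 3) U j * \sum_(m < 3) Fj j m
 - nu * \sum_(j < 3) \sum_(m < 3) Fjj j m
 = \sum_(m < 3) (Ft m + \sum_(j < 3) U j * Fj j m - nu * \sum_(j < 3) Fjj j m).
Proof. rewrite !big_ord_recr !big_ord0 /=. ring. Qed.

Lemma Gamma_mul nu (u : vfield R) f g : good f -> good g ->
  (forall k, good (pdx k f)) -> (forall k, good (pdx k g)) ->
  forall x t, Gamma nu u (fun x t => f x t * g x t) x t =
    f x t * Gamma nu u g x t + g x t * Gamma nu u f x t
    - 2 * nu * \sum_(k < 3) pdx k f x t * pdx k g x t.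
Proof.
move=> gf gg gfk ggk x t.
rewrite /Gamma /pdt.
have S1 : \sum_(j < 3) u j x t * pdx j (fun x t => f x t * g x t) x t =
   \sum_(j < 3) u j x t * (f x t * pdx j g x t + g x t * pdx j f x t).
  apply: eq_bigr => j _; rewrite /pdx pd_mul; try gds; reflexivity.
have S2 : \sum_(j < 3) pdx j (pdx j (fun x t => f x t * g x t)) x t =
   \sum_(j < 3) (f x t * pdx j (pdx j g) x t + pdx j g x t * pdx j f x t
      + (g x t * pdx j (pdx j f) x t + pdx j f x t * pdx j g x t)).
  apply: eq_bigr => j _; rewrite /pdx pd_mul; try gds.
  rewrite pd_add; try gds.
  by rewrite !pd_mul; try gds.
rewrite S1 S2 pd_mul; try gds.
exact: (alg_mul nu (f x t) (g x t) (pd None f x t) (pd None g x t) (fun j => u j x t)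
  (fun j => pdx j f x t) (fun j => pdx j g x t) (fun j => pdx j (pdx j f) x t) (fun j => pdx j (pdx j g) x t)).
Qed.

Lemma Gamma_sum nu (u : vfield R) (F : 'I_3 -> sfield R) :
  (forall m, good (F m)) -> (forall m k, good (pdx k (F m))) ->
  forall x t, Gamma nu u (fun x t => \sum_(m < 3) F m x t) x t =
    \sum_(m < 3) Gamma nu u (F m) x t.
Proof.
move=> gF gFk x t.
rewrite /Gamma /pdt.
have S1 : \sum_(j < 3) u j x t * pdx j (fun x t => \sum_(m < 3) F m x t) x t =
   \sum_(j < 3) u j x t * (\sum_(m < 3) pdx j (F m) x t).
  by apply: eq_bigr => j _; rewrite /pdx (pd_sumE _ (Some j) F gF).
have S2 : \sum_(j < 3) pdx j (pdx j (fun x t => \sum_(m < 3) F m x t)) x t =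
   \sum_(j < 3) \sum_(m < 3) pdx j (pdx j (F m)) x t.
  by apply: eq_bigr => j _; rewrite /pdx (pd_sumE _ (Some j) F gF)
    (pd_sumE _ (Some j) (fun m => pd (Some j) (F m)) (fun m => gFk m j)).
rewrite S1 S2 (pd_sumE _ None F gF).
exact: (alg_sum nu (fun j => u j x t) (fun m => pd None (F m) x t)
  (fun j m => pdx j (F m) x t) (fun j m => pdx j (pdx j (F m)) x t)).
Qed.


End C.
Arguments good_sum {R}.
Arguments pd_sumE {R}.
Arguments alg_mul {R}.
Arguments alg_sum {R}.
Arguments Gamma_mul {R}.
Arguments Gamma_sum {R}.

Opaque pd.
Section C.
Variable R : realType.
Implicit Types (g h : sfield R).
Ltac gd := repeat lazymatch goal with
  | |- good (fun x t => ?F x t) => change (good F)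
  | |- smooth (fun x t => ?F x t) => change (smooth F)
  | H : good ?g |- good ?g => exact: H
  | H : forall k, good (pdx k ?g) |- good (pd (Some ?j) ?g) => apply: (H j)
  | H : forall k, good (pdx k ?g) |- good (pdx ?j ?g) => apply: (H j)
  | |- good (fun x t => @?A x t - @?B x t) => apply: good_sub
  | |- good (fun x t => @?A x t + @?B x t) => apply: good_add
  | |- good (fun x t => @?A x t * @?B x t) => apply: good_mul
  | |- good (fun x t => \sum_(m < _) @?A m x t) => apply: good_sum => ?
  | |- good (fun _ _ => _) => apply: good_cst
  | |- good _ => apply: smooth_good
  | |- smooth (pd _ _) => apply: smooth_pd
  | |- smooth (pdx _ _) => apply: smooth_pd
  | H : forall j, smooth (?u j) |- smooth (?u _) => apply: H
  | H : smooth ?g |- smooth ?g => exact: H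
  end.
Ltac gds := solve [gd].

Lemma Gamma_ext nu (u : vfield R) G1 G2 : (forall d, pd d G1 = pd d G2) ->
  forall x t, Gamma nu u G1 x t = Gamma nu u G2 x t.
Proof.
move=> H x t; rewrite /Gamma /pdt /pdx.
have E1 : (fun j : 'I_3 => pd (Some j) G1) = (fun j => pd (Some j) G2).
  by apply: funext => j; rewrite H.
have E2 : (fun j : 'I_3 => pd (Some j) (pd (Some j) G1)) = (fun j => pd (Some j) (pd (Some j) G2)).
  by apply: funext => j; rewrite H.
pose Gm (P0 : sfield R) (P1 P2 : 'I_3 -> sfield R) :=
  P0 x t + \sum_(j < 3) u j x t * P1 j x t - nu * \sum_(j < 3) P2 j x t.
change (Gm (pd None G1) (fun j => pd (Some j) G1) (fun j => pd (Some j) (pd (Some j) G1)) =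
        Gm (pd None G2) (fun j => pd (Some j) G2) (fun j => pd (Some j) (pd (Some j) G2))).
rewrite E1 E2 H; reflexivity.
Qed.

Lemma pd_cadd d (c : R) g : good g -> pd d (fun x t => c + g x t) = pd d g.
Proof.
move=> gg; rewrite (pd_add d (fun _ _ => c) g (good_cst c) gg) pd_cst.
by apply: funext => y; apply: funext => s; rewrite add0r.
Qed.

Lemma Gamma_cadd nu (u : vfield R) (c : R) g : good g ->
  forall x t, Gamma nu u (fun x t => c + g x t) x t = Gamma nu u g x t.
Proof. by move=> gg; apply: Gamma_ext => d; apply: pd_cadd. Qed.

Lemma pd_zero i (G : sfield R) x t : (forall y, G y t = 0) -> pd (Some i) G x t = 0.
Proof.
move=> H; rewrite pd_sec derive1E.
have -> : section (Some i) G x t = cst 0 by apply: funext => s; apply: H.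
by rewrite derive_cst.
Qed.

Lemma pdxA (ell : vfield R) m j : good (ell m) ->
  pdx j (Amap ell m) = fun x t => evec R j 0 m + pdx j (ell m) x t.
Proof.
move=> ge; apply: funext => x; apply: funext => t.
rewrite /pdx !pd_sec !derive1E.
set c := evec R j 0 m.
have hd : is_derive (0:R) (1:R) (cst (x 0 m) + c *: (@id R)) (0 + c *: 1).
  exact: is_deriveD.
have H := is_deriveD hd (derivableP (ge (Some j) x t)).
have -> : section (Some j) (Amap ell m) x t =
   (cst (x 0 m) + c *: (@id R)) + section (Some j) (ell m) x t.
  apply: funext => s; rewrite /= /Amap mxE.
  have -> : (s *: evec R j) 0 m = s * c by rewrite mxE.
  rewrite [s * c]mulrC; reflexivity.
apply: etrans; first exact: (@derive_val _ _ _ _ _ _ _ H).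
by rewrite add0r [c%:A]mulr1.
Qed.

Lemma contract (G Q : 'M[R]_3) (i : 'I_3) (y : 'I_3 -> R) : Q *m G = 1%:M ->
  \sum_(m < 3) G m i * (\sum_(j < 3) Q j m * y j) = y i.
Proof.
move=> QG.
rewrite (eq_bigr (fun m => \sum_(j < 3) Q j m * G m i * y j)); last first.
  move=> m _; rewrite mulr_sumr; apply: eq_bigr => j _; ring.
rewrite exchange_big /=.
rewrite (eq_bigr (fun j => (Q *m G) j i * y j)); last first.
  move=> j _; rewrite mxE mulr_suml; apply: eq_bigr => m _; reflexivity.
rewrite QG (bigD1 i) //= mxE eqxx mulr1n mul1r big1 ?addr0 // => j /negPf ji.
by rewrite mxE ji mulr0n mul0r.
Qed.

Lemma final_alg (G Q : 'M[R]_3) (g : 'I_3 -> 'I_3 -> R) (i : 'I_3) (nu : R)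
  (Gv Ga vv f du : 'I_3 -> R) (dA dv : 'I_3 -> 'I_3 -> R) (H : 'I_3 -> 'I_3 -> 'I_3 -> R) :
  Q *m G = 1%:M -> (forall m j, G m j = g m j) ->
  (forall m, Gv m = 2 * nu * (\sum_(p < 3) \sum_(k < 3)
        (\sum_(j < 3) Q j m * H j k p) * dv p k) + \sum_(j < 3) Q j m * f j) ->
  (forall m, Ga m = - \sum_(j < 3) du j * g m j) ->
  (forall m k, dA m k = H i k m) ->
  \sum_(m < 3) (g m i * Gv m + vv m * Ga m - 2 * nu * \sum_(k < 3) dA m k * dv m k)
  + \sum_(j < 3) du j * (\sum_(m < 3) g m j * vv m) = f i.
Proof.
move=> QG hg hGv hGa hdA.
have -> : g = fun m j => G m j by apply: funext => m; apply: funext => j; rewrite hg.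
pose Y j := 2 * nu * (\sum_(p < 3) \sum_(k < 3) H j k p * dv p k) + f j.
have hGv' : forall m, Gv m = \sum_(j < 3) Q j m * Y j.
  move=> m; rewrite hGv /Y.
  rewrite !big_ord_recr !big_ord0 /=; ring.
have S : \sum_(m < 3) G m i * Gv m = Y i.
  rewrite -(contract G Q i Y QG); apply: eq_bigr => m _; by rewrite hGv'.
have -> : \sum_(m < 3) (G m i * Gv m + vv m * Ga m - 2 * nu * \sum_(k < 3) dA m k * dv m k)
   = \sum_(m < 3) G m i * Gv m + \sum_(m < 3) (vv m * Ga m - 2 * nu * \sum_(k < 3) dA m k * dv m k).
  rewrite -big_split /=; apply: eq_bigr => m _; ring.
rewrite S /Y.
have -> : Ga = fun m => - \sum_(j < 3) du j * G m j.
  by apply: funext => m; rewrite hGa; congr (- _); apply: eq_bigr => j _; rewrite hg.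
have -> : dA = fun m k => H i k m by apply: funext => m; apply: funext => k; rewrite hdA.
rewrite !big_ord_recr !big_ord0 /=; ring.
Qed.

Lemma alg_pdx (nu P0 : R) (Q W U A B du gj : 'I_3 -> R) :
 \sum_(j < 3) Q j = \sum_(j < 3) (U j * A j + gj j * du j) ->
 \sum_(j < 3) W j = \sum_(j < 3) B j ->
 P0 + \sum_(j < 3) Q j - nu * \sum_(j < 3) W j =
 (P0 + \sum_(j < 3) U j * A j - nu * \sum_(j < 3) B j) + \sum_(j < 3) du j * gj j.
Proof. move=> -> ->; rewrite !big_ord_recr !big_ord0 /=; ring. Qed.

End C.
Arguments Gamma_ext {R}.
Arguments pd_cadd {R}.
Arguments Gamma_cadd {R}.
Arguments pd_zero {R}.
Arguments pdxA {R}.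
Arguments contract {R}.
Arguments final_alg {R}.
Arguments alg_pdx {R}.

Opaque pd.
Section C.
Variable R : realType.
Implicit Types (g h : sfield R).
Ltac gd := repeat lazymatch goal with
  | |- good (fun x t => ?F x t) => change (good F)
  | |- smooth (fun x t => ?F x t) => change (smooth F)
  | H : good ?g |- good ?g => exact: H
  | H : forall k, good (pdx k ?g) |- good (pd (Some ?j) ?g) => apply: (H j)
  | H : forall k, good (pdx k ?g) |- good (pdx ?j ?g) => apply: (H j)
  | |- good (fun x t => @?A x t - @?B x t) => apply: good_sub
  | |- good (fun x t => @?A x t + @?B x t) => apply: good_add
  | |- good (fun x t => @?A x t * @?B x t) => apply: good_mul
  | |- good (fun x t => \sum_(m < _) @?A m x t) => apply: good_sum => ?
  | |- good (fun _ _ => _) => apply: good_cst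
  | |- good _ => apply: smooth_good
  | |- smooth (pd _ _) => apply: smooth_pd
  | |- smooth (pdx _ _) => apply: smooth_pd
  | H : forall j, smooth (?u j) |- smooth (?u _) => apply: H
  | H : smooth ?g |- smooth ?g => exact: H
  end.
Ltac gds := solve [gd].
Lemma pdx_Gamma nu (u : vfield R) g i : smooth g -> (forall j, smooth (u j)) ->
  forall x t, pdx i (Gamma nu u g) x t =
    Gamma nu u (pdx i g) x t + \sum_(j < 3) pdx i (u j) x t * pdx j g x t.
Proof.
move=> sg su x t.
have E1 : pd (Some i) (Gamma nu u g) = fun x t =>
    pd (Some i) (pd None g) x t
    + \sum_(j < 3) pd (Some i) (fun x t => u j x t * pd (Some j) g x t) x t
    - nu * \sum_(j < 3) pd (Some i) (pd (Some j) (pd (Some j) g)) x t.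
  rewrite /Gamma /pdt /pdx.
  rewrite (pd_sub (Some i) (fun x t => pd None g x t + \sum_(j < 3) u j x t * pd (Some j) g x t)
     (fun x t => nu * \sum_(j < 3) pd (Some j) (pd (Some j) g) x t)); [|gds|gds].
  rewrite (pd_add (Some i) (pd None g) (fun x t => \sum_(j < 3) u j x t * pd (Some j) g x t));
    [|gds|gds].
  rewrite (pd_sumE _ (Some i) (fun j x t => u j x t * pd (Some j) g x t)); last (move=> j; gds).
  rewrite (pd_mul (Some i) (fun _ _ => nu) (fun x t => \sum_(j < 3) pd (Some j) (pd (Some j) g) x t));
    [|gds|gds].
  rewrite pd_cst (pd_sumE _ (Some i) (fun j => pd (Some j) (pd (Some j) g))); last (move=> j; gds).
  apply: funext => y; apply: funext => s; rewrite mulr0 addr0; reflexivity.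
rewrite /pdx E1 (clairaut g (Some i) None sg).
rewrite /Gamma /pdt /pdx.
apply: (alg_pdx nu (pd None (pd (Some i) g) x t)
  (fun j => pd (Some i) (fun x t => u j x t * pd (Some j) g x t) x t)
  (fun j => pd (Some i) (pd (Some j) (pd (Some j) g)) x t)
  (fun j => u j x t) (fun j => pd (Some j) (pd (Some i) g) x t)
  (fun j => pd (Some j) (pd (Some j) (pd (Some i) g)) x t)
  (fun j => pd (Some i) (u j) x t) (fun j => pd (Some j) g x t)).
  apply: eq_bigr => j _.
  rewrite (pd_mul (Some i) (u j) (pd (Some j) g)); [|gds|gds].
  rewrite (clairaut g (Some i) (Some j) sg); reflexivity.
apply: eq_bigr => j _.
rewrite (clairaut (pd (Some j) g) (Some i) (Some j)); last gds.
rewrite (clairaut g (Some i) (Some j) sg); reflexivity.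
Qed.

Lemma good_Gamma nu (u : vfield R) g : smooth g -> (forall j, smooth (u j)) ->
  good (Gamma nu u g).
Proof. move=> sg su; rewrite /Gamma /pdt /pdx; gds. Qed.

End C.
Arguments pdx_Gamma {R}.
Arguments good_Gamma {R}.

Opaque pd.
Ltac gd := repeat lazymatch goal with
  | |- good (fun x t => ?F x t) => change (good F)
  | |- smooth (fun x t => ?F x t) => change (smooth F)
  | H : good ?g |- good ?g => exact: H
  | H : forall k, good (pdx k ?g) |- good (pd (Some ?j) ?g) => apply: (H j)
  | H : forall k, good (pdx k ?g) |- good (pdx ?j ?g) => apply: (H j)
  | |- good (fun x t => @?A x t - @?B x t) => apply: good_sub
  | |- good (fun x t => @?A x t + @?B x t) => apply: good_add
  | |- good (fun x t => @?A x t * @?B x t) => apply: good_mul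
  | |- good (fun x t => \sum_(m < _) @?A m x t) => apply: good_sum => ?
  | |- good (fun _ _ => _) => apply: good_cst
  | |- good _ => apply: smooth_good
  | |- smooth (pd _ _) => apply: smooth_pd
  | |- smooth (pdx _ _) => apply: smooth_pd
  | H : forall j, smooth (?u j) |- smooth (?u _) => apply: H
  | H : smooth ?g |- smooth ?g => exact: H
  end.
Ltac gds := solve [gd].

Lemma alg_Ga (R : realType) (du gl : 'I_3 -> R) (m : 'I_3) (Gp P0 : R) :
  P0 = Gp + \sum_(j < 3) du j * gl j -> P0 + du m = 0 ->
  Gp = - \sum_(j < 3) du j * (evec R j 0 m + gl j).
Proof.
move=> h1 h2.
have -> : \sum_(j < 3) du j * (evec R j 0 m + gl j) = du m + \sum_(j < 3) du j * gl j.
  rewrite (eq_bigr (fun j => du j * evec R j 0 m + du j * gl j)); last first.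
    by move=> j _; rewrite mulrDr.
  rewrite big_split /=; congr (_ + _).
  rewrite (bigD1 m) //= /evec mxE !eqxx /= mulr1 big1 ?addr0 // => j /negPf jm.
  by rewrite mxE eq_sym jm andbF mulr0.
lra.
Qed.

Theorem proposition3 (R : realType) (nu L T : R) (u f ell v : vfield R) :
  0 < nu -> 0 < L -> 0 < T ->
  smooth_v u -> smooth_v f -> smooth_v ell -> smooth_v v ->
  periodic_v L u -> periodic_v L f -> periodic_v L ell -> periodic_v L v ->
  (forall i x t, 0 <= t <= T -> Gamma nu u (ell i) x t + u i x t = 0) ->
  (forall x t, 0 <= t <= T -> gradA ell x t \in unitmx) ->
  (forall i x t, 0 <= t <= T ->
     Gamma nu u (v i) x t =
       2 * nu * (\sum_(m < 3) \sum_(k < 3) Ccoef ell m k i x t * pdx k (v m) x t)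
       + \sum_(j < 3) Qmat ell x t j i * f j x t) ->
  forall i x t, 0 <= t <= T ->
    Gamma nu u (wfield ell v i) x t
      + \sum_(j < 3) pdx i (u j) x t * wfield ell v j x t = f i x t.
Proof.
move=> nu0 L0 T0 su sf sl sv pu pf pl pv Hl HA Hv i x t Ht.
unfold smooth_v in su, sf, sl, sv.
have gl : forall m, good (ell m) by move=> m; exact: smooth_good (sl m).
have aE : forall m j, pdx j (Amap ell m) = fun x t => evec R j 0 m + pdx j (ell m) x t.
  by move=> m j; exact: pdxA (gl m).
have ga : forall m j, good (pdx j (Amap ell m)).
  by move=> m j; rewrite aE; gds.
have dak : forall m j k, pdx k (pdx j (Amap ell m)) = pdx k (pdx j (ell m)).
  move=> m j k; rewrite aE /pdx pd_cadd; [reflexivity|gds].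
have gak : forall m j k, good (pdx k (pdx j (Amap ell m))).
  by move=> m j k; rewrite dak; gds.
have gF : forall m, good (fun x t => pdx i (Amap ell m) x t * v m x t).
  move=> m; apply: good_mul; [exact: ga | exact: smooth_good (sv m)].
have gFk : forall m k, good (pdx k (fun x t => pdx i (Amap ell m) x t * v m x t)).
  move=> m k; rewrite /pdx pd_mul; [|exact: ga | exact: smooth_good (sv m)].
  apply: good_add; apply: good_mul.
  - exact: ga.
  - exact: smooth_good (smooth_pd _ _ (sv m)).
  - exact: smooth_good (sv m).
  - exact: gak.
have GS : Gamma nu u (wfield ell v i) x t =
    \sum_(m < 3) Gamma nu u (fun x t => pdx i (Amap ell m) x t * v m x t) x t.
  exact: (Gamma_sum nu u (fun m x t => pdx i (Amap ell m) x t * v m x t) gF gFk x t).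
have GM : forall m, Gamma nu u (fun x t => pdx i (Amap ell m) x t * v m x t) x t =
    pdx i (Amap ell m) x t * Gamma nu u (v m) x t
    + v m x t * Gamma nu u (pdx i (Amap ell m)) x t
    - 2 * nu * \sum_(k < 3) pdx k (pdx i (Amap ell m)) x t * pdx k (v m) x t.
  move=> m; exact: (Gamma_mul nu u _ _ (ga m i) (smooth_good _ (sv m)) (gak m i)
     (fun k => smooth_good _ (smooth_pd _ _ (sv m))) x t).
rewrite GS (eq_bigr _ (fun m _ => GM m)).
apply: (final_alg (gradA ell x t) (Qmat ell x t) (fun m j => pdx j (Amap ell m) x t) i nu
   (fun m => Gamma nu u (v m) x t) (fun m => Gamma nu u (pdx i (Amap ell m)) x t)
   (fun m => v m x t) (fun j => f j x t) (fun j => pdx i (u j) x t)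
   (fun m k => pdx k (pdx i (Amap ell m)) x t) (fun m k => pdx k (v m) x t)
   (fun j k p => pdx j (pdx k (Amap ell p)) x t)).
- rewrite /Qmat; exact: mulVmx (HA x t Ht).
- by move=> m j; rewrite /gradA mxE.
- move=> m; rewrite (Hv m x t Ht) /Ccoef; reflexivity.
- move=> m.
  rewrite (eq_bigr (fun j => pdx i (u j) x t * (evec R j 0 m + pdx j (ell m) x t))); last first.
    move=> j _; rewrite aE; reflexivity.
  rewrite aE (Gamma_cadd nu u (evec R i 0 m) (pdx i (ell m))); last by gds.
  have gG : good (Gamma nu u (ell m)) by exact: good_Gamma (sl m) su.
  have Z : pdx i (fun y s => Gamma nu u (ell m) y s + u m y s) x t = 0.
    exact: (pd_zero i _ x t (fun y => Hl m y t Ht)).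
  rewrite /pdx (pd_add (Some i) (Gamma nu u (ell m)) (u m)) in Z; [|exact: gG|gds].
  apply: (@alg_Ga R (fun j => pdx i (u j) x t) (fun j => pdx j (ell m) x t) m _
     (pdx i (Gamma nu u (ell m)) x t)); last exact: Z.
  exact: (pdx_Gamma nu u (ell m) i (sl m) su x t).
- move=> m k; rewrite !dak /pdx (clairaut (ell m) (Some k) (Some i) (sl m)); reflexivity.
Qed.
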